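(* Let $s\ge1$ and $n\ge0$ be integers. If $n\leq s$, then $A_{231,321}(U_{\mathrm{spine}=s,n}^\alpha)=1$. If $n>s$, then \[A_{231,321}(U_{\mathrm{spine}=s,n}^\alpha)=\sum_{j=1}^sA_{231,321}(U_{\mathrm{spine}=s,n-j}^\alpha).\]
   Context: For integers $s\ge1$ and $n\ge 0$, the labeled uneven comb $U^\alpha_{\mathrm{spine}=s,n}$ is the poset on $\{1,\dots,n\}$ whose order is generated by the covering relations $i\lessdot i+1$ for $1\le i\le s-1$ with $i+1\le n$, and $i\lessdot i+s$ whenever $i+s\le n$. A linear extension is viewed as a permutation of $[n]$ in which $x$ precedes $y$ whenever $x<y$ in the poset. $A_{231,321}(P)$ denotes the number of linear extensions of $P$ that avoid both patterns $231$ and $321$. *)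

(* Defs.v *)
From mathcomp Require Import all_boot.
Local Open Scope nat_scope.
Set Implicit Arguments. Unset Strict Implicit. Unset Printing Implicit Defensive.

(* Covering relations of the labeled uneven comb U^alpha_{spine=s,n} on {1..n}:
   i <. i+1 for 1 <= i <= s-1 (with i+1 <= n), and i <. i+s whenever i+s <= n.
   Elements are represented in 'I_n.+1; 0 is never related. *)
Definition comb_cover (s n : nat) (x y : 'I_n.+1) : bool :=
  let i := nat_of_ord x in let j := nat_of_ord y in
  [&& (1 <= i)%N, (j <= n)%N &
  (((i <= s - 1)%N && (j == i.+1)) || (j == i + s))].

Definition comb_lt (s n : nat) (x y : 'I_n.+1) : bool :=
  (x != y) && connect (@comb_cover s n) x y.

Definition is_linext (s n : nat) (w : seq nat) : bool :=
  perm_eq w (iota 1 n) &&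
  [forall x : 'I_n.+1, forall y : 'I_n.+1,
     @comb_lt s n x y ==> (index (x : nat) w < index (y : nat) w)].

Definition contains231 (w : seq nat) : bool :=
  [exists i : 'I_(size w), exists j : 'I_(size w), exists k : 'I_(size w),
     [&& i < j, j < k, nth 0 w k < nth 0 w i & nth 0 w i < nth 0 w j]].

Definition contains321 (w : seq nat) : bool :=
  [exists i : 'I_(size w), exists j : 'I_(size w), exists k : 'I_(size w),
     [&& i < j, j < k, nth 0 w k < nth 0 w j & nth 0 w j < nth 0 w i]].

Definition A_comb (s n : nat) : nat :=
  count (fun w => is_linext s n w && ~~ contains231 w && ~~ contains321 w)
        (permutations (iota 1 n)).

(* Main.v *)
Require Import Defs.
From mathcomp Require Import all_boot.
From mathcomp Require Import zify.
Set Implicit Arguments. Unset Strict Implicit. Unset Printing Implicit Defensive.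

Definition cov (s i j : nat) : bool :=
  (1 <= i) && (((i <= s - 1) && (j == i.+1)) || (j == i + s)).

Inductive clos (s : nat) : nat -> nat -> Prop :=
| cl_refl i : clos s i i
| cl_step i k j : cov s i k -> clos s k j -> clos s i j.

Lemma clos_mono s i j : 0 < s -> clos s i j ->
  i = j \/ (i < j /\ (s < j -> i + s <= j) /\ 1 <= i).
Proof.
move=> hs; elim=> [x|x k y hc _ IH]; first by left.
right; move: hc => /andP[h1 /orP[/andP[h2 /eqP hk]|/eqP hk]]; subst k.
- case: IH => [<-|[h3 [h4 h5]]]; first by lia.
  split; first by lia. split => //. move=> hsy; have := h4 hsy; lia.
- case: IH => [<-|[h3 [h4 h5]]]; first by lia.
  split; first by lia. split => //. move=> hsy; lia.
Qed.

Lemma cover_eq s n (x y : 'I_n.+1) : @comb_cover s n x y = cov s x y.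
Proof. rewrite /comb_cover /cov /=. have -> : (y <= n) = true by rewrite -ltnS ltn_ord. by []. Qed.

Lemma connect_clos s n (hs : 0 < s) (x y : 'I_n.+1) :
  connect (@comb_cover s n) x y <-> clos s x y.
Proof.
split.
- case/connectP=> p; elim: p x => [|z p IH] x /=; first by move=> _ ->; constructor.
  case/andP=> hxz hp hy; apply: cl_step (IH _ hp hy); by rewrite -cover_eq.
- suff H: forall i j, clos s i j -> forall x y : 'I_n.+1,
      nat_of_ord x = i -> nat_of_ord y = j -> connect (@comb_cover s n) x y.
    by move=> h; apply: H h _ _ erefl erefl.
  move=> i j; elim=> [k|i' k j' hc hcl IH] x' y' hx hy.
  + have -> : x' = y' by apply: val_inj; rewrite /= hx hy.
    exact: connect0.
  + have hk : k < n.+1.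
      have := clos_mono hs hcl; have := ltn_ord y'; rewrite hy; lia.
    apply: connect_trans (IH (Ordinal hk) y' erefl hy).
    by apply: connect1; rewrite cover_eq /= hx.
Qed.

Definition linN s n (w : seq nat) := forall x y, y <= n -> x <> y -> clos s x y ->
  index x w < index y w.

Lemma linextP s n w (hs : 0 < s) : is_linext s n w <-> perm_eq w (iota 1 n) /\ linN s n w.
Proof.
rewrite /is_linext; split.
- case/andP=> hp /forallP H; split => // x y hy hne hc.
  have hx : x < n.+1 by have := clos_mono hs hc; lia.
  move: (H (Ordinal hx)) => /forallP /(_ (Ordinal (hy : y < n.+1))) /implyP; apply.
  rewrite /comb_lt; apply/andP; split.
  + by apply/eqP => /(congr1 val) /=.
  + by apply/(connect_clos hs).
- case=> hp H; rewrite hp /=; apply/forallP => x; apply/forallP => y.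
  apply/implyP => /andP[hne /(connect_clos hs) hc]; apply: H => //.
  + by rewrite -ltnS ltn_ord.
  + by move=> e; move: hne; rewrite -val_eqE /= e eqxx.
Qed.

Definition badP (w : seq nat) := exists i j k, [/\ i < j < k, k < size w,
  nth 0 w k < nth 0 w i, nth 0 w k < nth 0 w j & nth 0 w i != nth 0 w j].

Lemma contains_bad w : contains231 w || contains321 w <-> badP w.
Proof.
split.
- case/orP => /existsP[i /existsP[j /existsP[k /and4P[h1 h2 h3 h4]]]];
  exists i, j, k; split => //; try lia; by apply/andP.
- move=> [i [j [k [/andP[h1 h2] h3 h4 h5 h6]]]].
  have hi : i < size w by lia.
  have hj : j < size w by lia.
  case: (ltngtP (nth 0 w i) (nth 0 w j)) => hij.
  + apply/orP; left; apply/existsP; exists (Ordinal hi); apply/existsP; exists (Ordinal hj);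
    apply/existsP; exists (Ordinal h3); rewrite /=; apply/and4P; split => //.
  + apply/orP; right; apply/existsP; exists (Ordinal hi); apply/existsP; exists (Ordinal hj);
    apply/existsP; exists (Ordinal h3); rewrite /=; apply/and4P; split => //.
  + by rewrite hij eqxx in h6.
Qed.

Definition goodb s n w := is_linext s n w && ~~ contains231 w && ~~ contains321 w.

Lemma goodP s n w (hs : 0 < s) : goodb s n w <-> [/\ perm_eq w (iota 1 n), linN s n w & ~ badP w].
Proof.
rewrite /goodb -andbA -negb_or; split.
- case/andP => /(linextP _ _ hs) [h1 h2] h3; split => // /contains_bad; by rewrite (negbTE h3).
- case=> h1 h2 h3; apply/andP; split; first by apply/(linextP _ _ hs).
  by apply/negP => /contains_bad.
Qed.


Lemma memP_iota m u x : perm_eq u (iota 1 m) -> (x \in u) = (1 <= x <= m).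
Proof. by move=> h; rewrite (perm_mem h) mem_iota; lia. Qed.

Lemma nth_w m j u q : size u = m -> q < m + j ->
  nth 0 (u ++ (m + j) :: iota m.+1 (j - 1)) q =
  if q < m then nth 0 u q else if q == m then m + j else q.
Proof.
move=> hu hq; rewrite nth_cat hu; case: ltnP => // h1.
case: eqP => [->|h2]; first by rewrite subnn.
have -> : q - m = (q - m - 1).+1 by lia.
rewrite /= nth_iota; lia.
Qed.

Lemma index_w_mid m j u x : size u = m -> x \notin u -> m < x < m + j ->
  index x (u ++ (m + j) :: iota m.+1 (j - 1)) = x.
Proof.
move=> hu hx hr; rewrite index_cat (negbTE hx) hu /=.
have -> : (m + j == x) = false by lia.
have : x \in iota m.+1 (j - 1) by rewrite mem_iota; lia.
move=> hin.
have hnth : nth 0 (iota m.+1 (j - 1)) (x - m.+1) = x by rewrite nth_iota; lia.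
have hi : index x (iota m.+1 (j - 1)) = x - m.+1.
  rewrite -{1}hnth index_uniq // ?iota_uniq // size_iota; lia.
rewrite hi; lia.
Qed.

Lemma index_w_top m j u : size u = m -> (m + j) \notin u ->
  index (m + j) (u ++ (m + j) :: iota m.+1 (j - 1)) = m.
Proof. by move=> hu hx; rewrite index_cat (negbTE hx) hu /= eqxx addn0. Qed.

Lemma index_w_low m j u x : x \in u ->
  index x (u ++ (m + j) :: iota m.+1 (j - 1)) = index x u.
Proof. by move=> hx; rewrite index_cat hx. Qed.


Lemma back s m j u : 0 < s -> 0 < j -> (j == 1) || (s < m + j) && (j <= s) ->
  perm_eq u (iota 1 m) -> linN s m u -> ~ badP u ->
  [/\ perm_eq (u ++ (m + j) :: iota m.+1 (j - 1)) (iota 1 (m + j)),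
      linN s (m + j) (u ++ (m + j) :: iota m.+1 (j - 1)) &
      ~ badP (u ++ (m + j) :: iota m.+1 (j - 1))].
Proof.
move=> hs hj hv hp hl hb.
have hsz : size u = m by rewrite (perm_size hp) size_iota.
have hmem := memP_iota _ hp.
split.
- rewrite iotaD; apply: perm_cat => //.
  have -> : iota (1 + m) j = iota m.+1 (j - 1) ++ [:: m + j].
    have {1}-> : j = (j - 1) + 1 by lia.
    rewrite iotaD /=; congr (_ ++ [:: _]); lia.
  by rewrite perm_sym perm_catC /=.
- move=> x y hy hne hc.
  have [hxy [hsy hx1]] : x < y /\ (s < y -> x + s <= y) /\ 1 <= x.
    by case: (clos_mono hs hc) => //.
  case: (leqP y m) => hym.
  + rewrite !index_w_low ?hmem; try lia.
    exact: hl.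
  + have hyu : y \notin u by rewrite hmem; lia.
    have hyw : m <= index y (u ++ (m + j) :: iota m.+1 (j - 1)).
      by rewrite index_cat (negbTE hyu) hsz leq_addr.
    case: (leqP x m) => hxm.
    * have hxu : x \in u by rewrite hmem; lia.
      rewrite index_w_low //; apply: leq_trans hyw.
      by rewrite -hsz index_mem.
    * have hxu : x \notin u by rewrite hmem; lia.
      rewrite index_w_mid //; last by lia.
      case: (ltnP y (m + j)) => hyn.
      -- by rewrite index_w_mid //; lia.
      -- exfalso. move: hv => /orP[/eqP hj1|/andP[h1 h2]]; first by lia.
         have := hsy ltac:(lia); lia.
- move=> [i [j' [k [/andP[h1 h2] h3 h4 h5 h6]]]].
  have hsw : size (u ++ (m + j) :: iota m.+1 (j - 1)) = m + j.
    by rewrite size_cat /= size_iota hsz; lia.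
  rewrite hsw in h3.
  have bnd q : q < m -> nth 0 u q <= m.
    move=> hq; have hq' : q < size u by rewrite hsz.
    by move: (mem_nth 0 hq'); rewrite hmem => /andP[].
  rewrite !nth_w // in h4 h5 h6; try lia.
  case: (ltnP k m) => hkm.
  + have hi : i < m by lia.
    have hj2 : j' < m by lia.
    rewrite hkm hi hj2 in h4 h5 h6.
    apply: hb; exists i, j', k; split => //; first by apply/andP.
    by rewrite hsz.
  + have hk : (k < m) = false by apply/negbTE; rewrite -leqNgt.
    rewrite hk in h4 h5; clear h6.
    case: (ltnP i m) => hi.
    * rewrite hi in h4; have := bnd i hi; move: h4; case: eqP => _ h4 hb2; lia.
    * have hj1 : (j' < m) = false by apply/negbTE; rewrite -leqNgt; lia.
      have hj3 : (j' == m) = false by apply/negbTE; lia.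
      rewrite hj1 hj3 in h5; move: h5; case: eqP => _ h5; lia.
Qed.


Ltac clean := repeat match goal with
  | H : forall _, _ |- _ => clear H
  | H : perm_eq _ _ |- _ => clear H
  | H : ~ badP _ |- _ => clear H
  | H : linN _ _ _ |- _ => clear H
  | H : is_true (uniq _) |- _ => clear H
  | H : @eq (seq _) _ _ |- _ => clear H
  | H : is_true (_ \in _) |- _ => clear H
  | H : is_true (_ \notin _) |- _ => clear H
  | H : is_true (~~ has _ _) |- _ => clear H
  end.
Ltac slia := clean; lia.

Lemma fwd s n w : 0 < s -> 0 < n -> perm_eq w (iota 1 n) -> linN s n w -> ~ badP w ->
  exists m u, [/\ m < n, (n - m == 1) || (s < n) && (n - m <= s),
    w = u ++ n :: iota m.+1 (n - m - 1),
    perm_eq u (iota 1 m) & linN s m u /\ ~ badP u].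
Proof.
move=> hs hn hp hl hb.
have hmw : forall x, (x \in w) = (1 <= x <= n) by move=> x; rewrite (perm_mem hp) mem_iota; slia.
have hsw : size w = n by rewrite (perm_size hp) size_iota.
have hun : uniq w by rewrite (perm_uniq hp) iota_uniq.
have hnw : n \in w by rewrite hmw; slia.
set m := index n w.
have hm : m < n by rewrite -hsw index_mem.
set u := take m w; set t := drop m.+1 w.
have hw : w = u ++ n :: t.
  by rewrite -{1}(cat_take_drop m w) (drop_nth 0) ?nth_index // hsw.
have hsu : size u = m by rewrite size_take hsw hm.
have hst : size t = n - m - 1 by rewrite size_drop hsw; slia.
have hmw2 : forall x, (x \in u ++ n :: t) = (1 <= x <= n) by rewrite -hw.
have hun2 : uniq (u ++ n :: t) by rewrite -hw.
have hindn : index n (u ++ n :: t) = m by rewrite -hw.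
clearbody u t m.
move: hun2; rewrite cat_uniq /= => /and4P[huu hdis hnt hut].
move: hdis; rewrite negb_or => /andP[hnu hdis].
have hdis2 : forall x, x \in u -> x \in t -> False.
  by move=> x hx hxt; move/negP: hdis; apply; apply/hasP; exists x.
have hvu : forall x, x \in u -> 1 <= x <= n - 1.
  move=> x hx; have := hmw2 x; rewrite mem_cat hx /= => /esym h.
  have : x != n by apply: contraNneq hnu => <-.
  move: h; slia.
have hvt : forall x, x \in t -> 1 <= x <= n - 1.
  move=> x hx; have := hmw2 x; rewrite mem_cat inE hx !orbT => /esym h.
  have : x != n by apply: contraNneq hnt => <-.
  move: h; slia.
have hnth : forall q, nth 0 (u ++ n :: t) q =
    if q < m then nth 0 u q else if q == m then n else nth 0 t (q - m.+1).
  move=> q; rewrite nth_cat hsu; case: ltnP => // h1.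
  case: eqP => [->|h2]; first by rewrite subnn.
  by have -> : q - m = (q - m.+1).+1 by slia.
have hsw2 : size (u ++ n :: t) = n by rewrite -hw.
rewrite hw in hl hb.
have hAu : forall x, x \in u -> nth 0 (u ++ n :: t) (index x u) = x /\ index x u < m.
  move=> x hx; have hlt : index x u < m by rewrite -hsu index_mem.
  by rewrite hnth hlt nth_index.
have hAt : forall y, y \in t -> nth 0 (u ++ n :: t) (m.+1 + index y t) = y /\ m.+1 + index y t < n.
  move=> y hy; have hlt : index y t < size t by rewrite index_mem.
  rewrite hnth (_ : (m.+1 + index y t < m) = false); last by slia.
  rewrite (_ : (m.+1 + index y t == m) = false); last by slia.
  rewrite (_ : m.+1 + index y t - m.+1 = index y t); last by slia.
  rewrite nth_index //; split => //; rewrite hst in hlt; slia.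
have hAn : nth 0 (u ++ n :: t) m = n by rewrite hnth ltnn eqxx.
have hi : forall x y, x \in u -> y \in t -> x < y.
  move=> x y hx hy; rewrite ltnNge; apply/negP => hyx.
  have hne : x != y by apply/negP => /eqP e; subst y; exact: hdis2 hx hy.
  have [e1 l1] := hAu x hx; have [e2 l2] := hAt y hy.
  have := hvu x hx; have := hvt y hy => b2 b1.
  apply: hb; exists (index x u), m, (m.+1 + index y t); split.
  - by apply/andP; split; slia.
  - by rewrite hsw2.
  - by rewrite e1 e2; slia.
  - by rewrite e2 hAn; slia.
  - by rewrite e1 hAn; slia.
have hAt2 : forall a, a < size t -> nth 0 (u ++ n :: t) (m.+1 + a) = nth 0 t a.
  move=> a ha; rewrite hnth (_ : (m.+1 + a < m) = false); last by slia.
  rewrite (_ : (m.+1 + a == m) = false); last by slia.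
  by rewrite (_ : m.+1 + a - m.+1 = a); last by slia.
have hii : sorted ltn t.
  rewrite sorted_pairwise; last exact: ltn_trans.
  apply/(pairwiseP 0) => a b ha hb2 hab.
  rewrite !inE in ha hb2.
  change (nth 0 t a < nth 0 t b); rewrite ltnNge; apply/negP => hba.
  have hne : nth 0 t a != nth 0 t b by rewrite nth_uniq // neq_ltn hab.
  have := hvt _ (mem_nth 0 ha); have := hvt _ (mem_nth 0 hb2) => b2 b1.
  apply: hb; exists m, (m.+1 + a), (m.+1 + b); split.
  - by apply/andP; split; slia.
  - by rewrite hsw2; rewrite hst in hb2; slia.
  - rewrite !hAt2 // hAn; move: b2; clean; move: (nth 0 t b) => v; lia.
  - rewrite !hAt2 //; move: hne hba; clean; move: (nth 0 t b) (nth 0 t a) => v v'; lia.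
  - rewrite !hAt2 // hAn; move: b1; clean; move: (nth 0 t a) => v; lia.
have hA : forall x, x \in u -> x <= m.
  move=> x hx; rewrite leqNgt; apply/negP => hxm.
  have hun3 : uniq (x :: t) by rewrite /= hut andbT; apply/negP => /(hdis2 x hx).
  have hsub : {subset x :: t <= iota m.+1 (n - m - 1)}.
    move=> z; rewrite inE mem_iota => /orP[/eqP ->|hz].
    + by have := hvu x hx; slia.
    + have := hi x z hx hz; have := hvt z hz; slia.
  have := uniq_leq_size hun3 hsub; rewrite /= size_iota hst; slia.
have hB : forall y, y \in t -> m < y.
  move=> y hy; rewrite ltnNge; apply/negP => hym.
  have hun3 : uniq (y :: u) by rewrite /= huu andbT; apply/negP => /hdis2 /(_ hy).
  have hsub : {subset y :: u <= iota 1 m}.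
    move=> z; rewrite inE mem_iota => /orP[/eqP ->|hz].
    + by have := hvt y hy; slia.
    + have := hi z y hz hy; have := hvu z hz; slia.
  have := uniq_leq_size hun3 hsub; rewrite /= size_iota hsu; slia.
have hpu : perm_eq u (iota 1 m).
  apply: uniq_perm => //; first exact: iota_uniq.
  apply: (@uniq_min_size _ u (iota 1 m) huu _ _).2 => [z hz|]; last by rewrite size_iota hsu.
  by rewrite mem_iota; have := hA z hz; have := hvu z hz; slia.
have htI : t = iota m.+1 (n - m - 1).
  apply: (irr_sorted_eq ltn_trans ltnn) => //; first exact: iota_ltn_sorted.
  apply: (@uniq_min_size _ t (iota m.+1 (n - m - 1)) hut _ _).2 => [z hz|]; last by rewrite size_iota hst.
  by rewrite mem_iota; have := hB z hz; have := hvt z hz; slia.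
exists m, u; split => //.
- case: eqP => //= hj1.
  have hn1 : n.-1 \in t by rewrite htI mem_iota; slia.
  have hlt : index n.-1 (u ++ n :: t) > m.
    by have [e l] := hAt _ hn1; rewrite index_cat (_ : (n.-1 \in u) = false) ?hsu /=;
      [ rewrite (_ : (n == n.-1) = false) //; slia | apply/negP => /hdis2 /(_ hn1) ].
  apply/andP; split.
  + rewrite ltnNge; apply/negP => hns.
    have hc : clos s n.-1 n.
      apply: (cl_step (k := n)); last exact: cl_refl.
      rewrite /cov; apply/andP; split; first by slia.
      by apply/orP; left; apply/andP; split; slia.
    have := hl n.-1 n (leqnn n) ltac:(slia) hc; rewrite hindn; slia.
  + rewrite leqNgt; apply/negP => hjs.
    have hns : n - s \in t by rewrite htI mem_iota; slia.
    have hlt2 : index (n - s) (u ++ n :: t) > m.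
      by rewrite index_cat (_ : (n - s \in u) = false) ?hsu /=;
        [ rewrite (_ : (n == n - s) = false) //; slia | apply/negP => /hdis2 /(_ hns) ].
    have hc : clos s (n - s) n.
      apply: (cl_step (k := n)); last exact: cl_refl.
      rewrite /cov; apply/andP; split; first by slia.
      by apply/orP; right; apply/eqP; slia.
    have := hl (n - s) n (leqnn n) ltac:(slia) hc; rewrite hindn; slia.
- by rewrite -htI.
- split.
  + move=> x y hy hne hc.
    have [hxy [_ hx1]] : x < y /\ (s < y -> x + s <= y) /\ 1 <= x.
      by case: (clos_mono hs hc) => //.
    have hxu : x \in u by rewrite (perm_mem hpu) mem_iota; slia.
    have hyu : y \in u by rewrite (perm_mem hpu) mem_iota; slia.
    have := hl x y ltac:(slia) hne hc.
    by rewrite !index_cat hxu hyu.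
  + move=> [i [j [k [/andP[h1 h2] h3 h4 h5 h6]]]].
    apply: hb; exists i, j, k; rewrite !nth_cat hsu -hsu.
    have hi' : i < size u by apply: ltn_trans h1 (ltn_trans h2 h3).
    have hj' : j < size u by apply: ltn_trans h2 h3.
    rewrite h3 hi' hj'; split => //; first by apply/andP.
    by rewrite size_cat /=; slia.
Qed.


Lemma uniq_flat (J : seq nat) (L : nat -> seq (seq nat)) (f : nat -> seq nat -> seq nat) :
  uniq J -> (forall j, j \in J -> uniq (L j)) ->
  (forall j1 j2 u1 u2, j1 \in J -> j2 \in J -> u1 \in L j1 -> u2 \in L j2 ->
     f j1 u1 = f j2 u2 -> j1 = j2 /\ u1 = u2) ->
  uniq (flatten [seq [seq f j u | u <- L j] | j <- J]).
Proof.
elim: J => [//|j J IH] /= /andP[hjJ huJ] hL hinj.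
rewrite cat_uniq; apply/and3P; split.
- rewrite map_inj_in_uniq; first by apply: hL; rewrite inE eqxx.
  move=> u1 u2 h1 h2 e; have hj : j \in j :: J by rewrite inE eqxx.
  by have [] := hinj j j u1 u2 hj hj h1 h2 e.
- apply/hasP => -[w /flattenP[ws /mapP[j2 hj2 ->] /mapP[u2 hu2 ->]] /mapP[u1 hu1 e]].
  have hj : j \in j :: J by rewrite inE eqxx.
  have hj2' : j2 \in j :: J by rewrite inE hj2 orbT.
  have [ej _] := hinj j j2 u1 u2 hj hj2' hu1 hu2 (esym e).
  by subst j2; rewrite hj2 in hjJ.
- apply: IH => //.
  + by move=> j2 h; apply: hL; rewrite inE h orbT.
  + by move=> j1 j2 u1 u2 h1 h2; apply: hinj; rewrite inE ?h1 ?h2 orbT.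
Qed.

Definition S s n := [seq w <- permutations (iota 1 n) | goodb s n w].
Definition Jn s n := if s < n then iota 1 s else [:: 1].
Definition fb n j (u : seq nat) := u ++ n :: iota (n - j).+1 (j - 1).

Lemma memS s n w : (w \in S s n) = goodb s n w.
Proof.
rewrite mem_filter mem_permutations; apply/andP/idP => [[]//|h]; split => //.
by move: h; rewrite /goodb /is_linext => /andP[/andP[/andP[]]].
Qed.

Lemma memJ s n j : 0 < s -> 0 < n -> (j \in Jn s n) = [&& 0 < j, j <= n & (j == 1) || (s < n) && (j <= s)].
Proof.
move=> hs hn; rewrite /Jn; case: ltnP => h.
- rewrite mem_iota /=; case: eqP => [->|hj1] /=; first by rewrite andbT; apply/idP/idP; lia.
  apply/idP/idP => /andP[h1 h2]; apply/andP; split => //.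
  + by apply/andP; split; lia.
  + by move: h2 => /andP[h2 h3]; lia.
- rewrite inE /= ?orbF; case: eqP => [->|_]; first by rewrite /= hn.
  by rewrite !andbF.
Qed.

Lemma key s n : 0 < s -> 0 < n ->
  perm_eq (S s n) (flatten [seq [seq fb n j u | u <- S s (n - j)] | j <- Jn s n]).
Proof.
move=> hs hn.
apply: uniq_perm.
- by rewrite filter_uniq // permutations_uniq.
- apply: uniq_flat.
  + by rewrite /Jn; case: ifP => _; rewrite ?iota_uniq.
  + by move=> j _; rewrite filter_uniq // permutations_uniq.
  + move=> j1 j2 u1 u2 hj1 hj2; rewrite !memS => /(goodP _ _ hs) [hp1 _ _] /(goodP _ _ hs) [hp2 _ _].
    rewrite memJ // in hj1; rewrite memJ // in hj2.
    have hn1 : n \notin u1 by rewrite (perm_mem hp1) mem_iota; lia.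
    have hn2 : n \notin u2 by rewrite (perm_mem hp2) mem_iota; lia.
    have s1 : size u1 = n - j1 by rewrite (perm_size hp1) size_iota.
    have s2 : size u2 = n - j2 by rewrite (perm_size hp2) size_iota.
    rewrite /fb => e.
    have ei : index n (u1 ++ n :: iota (n - j1).+1 (j1 - 1)) = index n (u2 ++ n :: iota (n - j2).+1 (j2 - 1)) by rewrite e.
    rewrite !index_cat (negbTE hn1) (negbTE hn2) /= !eqxx !addn0 s1 s2 in ei.
    have ej : j1 = j2 by lia.
    split => //; subst j2.
    by rewrite -(take_size_cat (n :: iota (n - j1).+1 (j1 - 1)) s1) e take_size_cat.
- move=> w; rewrite memS; apply/idP/flattenP.
  + move/(goodP _ _ hs) => [hp hl hb].
    have [m [u [hm hv hw hpu [hlu hbu]]]] := fwd hs hn hp hl hb.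
    exists [seq fb n (n - m) u | u <- S s (n - (n - m))].
    * apply/mapP; exists (n - m) => //; rewrite memJ //; apply/and3P; split => //; lia.
    * apply/mapP; exists u.
      -- by rewrite memS (_ : n - (n - m) = m); [apply/(goodP _ _ hs) | lia].
      -- by rewrite hw /fb (_ : n - (n - m) = m) //; lia.
  + move=> [ws /mapP[j hj ->] /mapP[u hu ->]].
    rewrite memJ // in hj; move: hj => /and3P[hj0 hjn hv].
    move: hu; rewrite memS => /(goodP _ _ hs) [hp hl hb].
    have := back hs hj0 (m := n - j) ltac:(rewrite subnK //) hp hl hb.
    rewrite subnK // => -[h1 h2 h3]; apply/(goodP _ _ hs); split => //.
Qed.

Lemma A_rec s n : 0 < s -> 0 < n -> A_comb s n = \sum_(j <- Jn s n) A_comb s (n - j).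
Proof.
move=> hs hn.
have hA : forall k, A_comb s k = size (S s k) by move=> k; rewrite /A_comb /S size_filter.
rewrite hA (perm_size (key hs hn)) size_flatten /shape -map_comp sumnE big_map.
by apply: eq_bigr => j _; rewrite /= size_map hA.
Qed.

Lemma A0 s : 0 < s -> A_comb s 0 = 1.
Proof.
move=> hs.
have h : goodb s 0 [::] = true.
  apply/(goodP _ _ hs); split => //.
  - move=> x y hy hne hc; have := clos_mono hs hc; lia.
  - by move=> [i [j [k [_ h _ _ _]]]].
by rewrite /A_comb /= -/(goodb s 0 [::]) h.
Qed.


Theorem theorem7 (s n : nat) (hs : 1 <= s) :
  (n <= s -> A_comb s n = 1) /\
  (s < n -> A_comb s n = \sum_(1 <= j < s.+1) A_comb s (n - j)).
Proof.
split.
- elim: n => [|n IH] hn; first exact: A0.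
  rewrite A_rec // /Jn ltnNge hn /= big_cons big_nil addn0 subn1 /=.
  by apply: IH; apply: ltnW.
- move=> hsn; rewrite A_rec //; last by apply: leq_ltn_trans hsn.
  by rewrite /Jn hsn /index_iota subn1.
Qed.
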